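(* Let $a,b,c$ be positive numbers with $a<b<c$, and suppose $Q_{a,b,c}<+\infty$. Then for every $t\in[0,b)$ and every complex vector $\mathbf z=(\mathbf z(\lambda))_{\lambda\in b\mathbb Z}$, $$\sum_{\mu\in a\mathbb Z,\ 0\le\mu\le aQ_{a,b,c}+2a+b+c}|(\mathbf M_{a,b,c}(t)\mathbf z)(\mu)|\ \ge\ \frac{b}{2c}|\mathbf z(0)|.$$
   Context: For $a,b,c>0$ and $t\in\mathbb R$, $\mathbf M_{a,b,c}(t)=(\chi_{[0,c)}(t-\mu+\lambda))_{\mu\in a\mathbb Z,\lambda\in b\mathbb Z}$ is the infinite matrix with rows indexed by $a\mathbb Z$ and columns by $b\mathbb Z$, acting by $(\mathbf M_{a,b,c}(t)\mathbf x)(\mu)=\sum_{\lambda\in b\mathbb Z}\chi_{[0,c)}(t-\mu+\lambda)\mathbf x(\lambda)$ (each such sum is finite). $\mathcal B_b$ is the set of vectors $(\mathbf x(\lambda))_{\lambda\in b\mathbb Z}$ with entries in $\{0,1\}$. For $t\in\mathbb R$ and $\mathbf x\in\mathcal B_b$, let $K(t,\mathbf x)=\{\mu\in a\mathbb Z:(\mathbf M_{a,b,c}(t)\mathbf x)(\mu)=2\}$, let $Q_{a,b,c}(t,\mathbf x)=0$ if $K(t,\mathbf x)=\emptyset$ and otherwise $Q_{a,b,c}(t,\mathbf x)=\sup\{n\in\mathbb N:[\mu,\mu+na)\cap a\mathbb Z\subset K(t,\mathbf x)\text{ for some }\mu\in a\mathbb Z\}$, and $Q_{a,b,c}=\sup_{t\in\mathbb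 R}\sup_{\mathbf x\in\mathcal B_b}Q_{a,b,c}(t,\mathbf x)$. *)

(* Defs.v *)
From Stdlib Require Import Reals Lra ZArith.
Open Scope R_scope.

Fixpoint zsum (lo : Z) (n : nat) (f : Z -> R) : R :=
  match n with
  | O => 0
  | S n' => f (lo + Z.of_nat n')%Z + zsum lo n' f
  end.

(* Entry of M_{a,b,c}(t) at row mu = a*m (m in Z), column lambda = b*k (k in Z):
   chi_[0,c)(t - mu + lambda). *)
Definition Mentry (a b c t : R) (m k : Z) : R :=
  if Rle_dec 0 (t - a * IZR m + b * IZR k) then
    if Rlt_dec (t - a * IZR m + b * IZR k) c then 1 else 0
  else 0.

(* (M_{a,b,c}(t) x)(a m) = sum_{k in Z} Mentry * x(b k).  Only finitely many k
   have a nonzero entry (those with a m - t <= b k < a m - t + c); all of them lie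
   in the window [K0, K0 + n) below (K0 = floor((am - t)/b) - 1,
   n = up(c/b) + 3), so this finite sum equals the full (finite-support) sum. *)
Definition Mwin_lo (a b t : R) (m : Z) : Z := (up ((a * IZR m - t) / b) - 2)%Z.
Definition Mwin_len (b c : R) : nat := Z.to_nat (up (c / b) + 3).

Definition Mapply (a b c t : R) (x : Z -> R) (m : Z) : R :=
  zsum (Mwin_lo a b t m) (Mwin_len b c) (fun k => Mentry a b c t m k * x k).

(* Complex numbers as pairs (re, im) of reals; a complex vector indexed by bZ
   is a map Z -> R * R (z k = z(b k)). *)
Definition Cmod (p : R * R) : R := sqrt (fst p * fst p + snd p * snd p).

Definition Mapply_C (a b c t : R) (z : Z -> R * R) (m : Z) : R * R :=
  (Mapply a b c t (fun k => fst (z k)) m, Mapply a b c t (fun k => snd (z k)) m).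

(* Binary vectors x in B_b : Z -> bool, viewed as {0,1}-valued. *)
Definition b2R (x : bool) : R := if x then 1 else 0.

Definition inK (a b c t : R) (x : Z -> bool) (m : Z) : Prop :=
  Mapply a b c t (fun k => b2R (x k)) m = 2.

Definition run_in_K (a b c t : R) (x : Z -> bool) (m : Z) (n : nat) : Prop :=
  forall j : nat, (j < n)%nat -> inK a b c t x (m + Z.of_nat j)%Z.

(* n is an achievable run length for some t, x (n = 0 is always achievable,
   matching the convention Q(t,x) = 0 when K(t,x) is empty). *)
Definition run_len (a b c : R) (n : nat) : Prop :=
  exists (t : R) (x : Z -> bool) (m : Z), run_in_K a b c t x m n.

(* "Q_{a,b,c} < +infinity and Q_{a,b,c} = Q": Q is the supremum (in N) of the
   achievable run lengths. *)
Definition IsQ (a b c : R) (Q : nat) : Prop :=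
  (forall n, run_len a b c n -> (n <= Q)%nat) /\
  (forall N : nat, (forall n, run_len a b c n -> (n <= N)%nat) -> (Q <= N)%nat).

Definition sum_mu (a B : R) (F : Z -> R) : R :=
  zsum 0 (S (Z.to_nat (up (B / a))))
    (fun m => if Rle_dec (a * IZR m) B then F m else 0).

(* Main.v *)
Require Import Defs.
From Stdlib Require Import Reals ZArith Lra Lia List Bool Classical.
Open Scope R_scope.


Lemma zsum_ext lo n f g : (forall k, (lo <= k < lo + Z.of_nat n)%Z -> f k = g k) ->
  zsum lo n f = zsum lo n g.
Proof.
  induction n; intros H; simpl; auto.
  rewrite H by lia. rewrite IHn; auto. intros k Hk; apply H; lia.
Qed.

Lemma zsum_split lo n p f : zsum lo (n + p) f = zsum lo n f + zsum (lo + Z.of_nat n) p f.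
Proof.
  induction p; simpl.
  - rewrite Nat.add_0_r; ring.
  - rewrite Nat.add_succ_r; simpl. rewrite IHp.
    replace (lo + Z.of_nat (n + p))%Z with (lo + Z.of_nat n + Z.of_nat p)%Z by lia. ring.
Qed.

Lemma zsum_S_lo lo n f : zsum lo (S n) f = f lo + zsum (lo + 1) n f.
Proof.
  change (S n) with (1 + n)%nat. rewrite zsum_split. simpl.
  replace (lo + 0)%Z with lo by lia. ring.
Qed.

Lemma zsum_nonneg lo n f : (forall k, 0 <= f k) -> 0 <= zsum lo n f.
Proof. induction n; intros H; simpl; [lra|]. pose proof (H (lo + Z.of_nat n)%Z). specialize (IHn H). lra. Qed.

Lemma zsum_plus lo n f g : zsum lo n (fun k => f k + g k) = zsum lo n f + zsum lo n g.
Proof. induction n; simpl; [ring|]. rewrite IHn; ring. Qed.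

Lemma zsum_ind lo n p : (lo <= p < lo + Z.of_nat n)%Z ->
  zsum lo n (fun k => if Z.eq_dec k p then 1 else 0) = 1.
Proof.
  induction n; intros H; simpl; [lia|].
  destruct (Z.eq_dec (lo + Z.of_nat n) p).
  - assert (zsum lo n (fun k => if Z.eq_dec k p then 1 else 0) = 0).
    { clear IHn. assert (forall m, (m <= n)%nat -> zsum lo m (fun k => if Z.eq_dec k p then 1 else 0) = 0).
      { induction m; intros Hm; simpl; auto. destruct (Z.eq_dec _ p); [lia|]. rewrite IHm; [ring|lia]. }
      apply H0; lia. }
    lra.
  - rewrite IHn by lia. ring.
Qed.

Definition ceil (y : R) : Z := (1 - up (- y))%Z.

Lemma ceil_spec y : y <= IZR (ceil y) < y + 1.
Proof.
  unfold ceil. destruct (archimed (- y)) as [H1 H2].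
  rewrite minus_IZR. simpl. lra.
Qed.

Lemma ceil_ge k y : (IZR k >= y) <-> (k >= ceil y)%Z.
Proof.
  destruct (ceil_spec y) as [Ha Hb]. split; intros H.
  - destruct (Z_ge_lt_dec k (ceil y)) as [|Hl]; auto.
    assert (H2 : IZR k <= IZR (ceil y - 1)) by (apply IZR_le; lia).
    rewrite minus_IZR in H2. simpl in H2. lra.
  - apply Z.ge_le in H. apply IZR_le in H. lra.
Qed.

Lemma ceil_lt k y : (IZR k < y) <-> (k < ceil y)%Z.
Proof.
  pose proof (ceil_ge k y) as [H1 H2]. split; intros H.
  - destruct (Z_lt_ge_dec k (ceil y)) as [|Hg]; auto. apply H2 in Hg. lra.
  - destruct (Rlt_dec (IZR k) y) as [|Hn]; auto. assert (IZR k >= y) by lra. apply H1 in H0. lia.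
Qed.

Lemma ceil_mono y y' : y <= y' <= y + 1 -> (ceil y <= ceil y' <= ceil y + 1)%Z.
Proof.
  intros H. destruct (ceil_spec y), (ceil_spec y'). split.
  - assert (IZR (ceil y') >= y) by lra. apply ceil_ge in H4. lia.
  - assert (IZR (ceil y + 1) >= y') by (rewrite plus_IZR; simpl; lra).
    apply ceil_ge in H4. lia.
Qed.

Lemma Cmod_nonneg p : 0 <= Cmod p.
Proof. unfold Cmod; apply sqrt_pos. Qed.

Lemma Cmod_tri x1 y1 x2 y2 :
  Cmod (x1 + x2, y1 + y2) <= Cmod (x1, y1) + Cmod (x2, y2).
Proof.
  unfold Cmod; simpl.
  set (A := x1 * x1 + y1 * y1). set (B := x2 * x2 + y2 * y2).
  assert (HA : 0 <= A) by (unfold A; nra). assert (HB : 0 <= B) by (unfold B; nra).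
  pose proof (sqrt_pos A). pose proof (sqrt_pos B).
  apply Rsqr_incr_0_var. 2: { apply Rplus_le_le_0_compat; assumption. }
  rewrite Rsqr_sqrt by (pose proof (Rle_0_sqr (x1+x2)); pose proof (Rle_0_sqr (y1+y2)); unfold Rsqr in *; lra). unfold Rsqr.
  replace ((sqrt A + sqrt B) * (sqrt A + sqrt B)) with (sqrt A * sqrt A + sqrt B * sqrt B + 2 * (sqrt A * sqrt B)) by ring.
  rewrite !sqrt_sqrt by lra. rewrite <- sqrt_mult by lra.
  assert (x1 * x2 + y1 * y2 <= sqrt (A * B)).
  { destruct (Rle_dec (x1 * x2 + y1 * y2) 0). { pose proof (sqrt_pos (A*B)); lra. }
    rewrite <- (sqrt_square (x1 * x2 + y1 * y2)) by lra.
    apply sqrt_le_1_alt. unfold A, B. pose proof (Rle_0_sqr (x1*y2 - x2*y1)). unfold Rsqr in *. nra. }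
  unfold A, B in *. nra.
Qed.

Lemma Cmod_opp x y : Cmod (- x, - y) = Cmod (x, y).
Proof. unfold Cmod; simpl. f_equal; ring. Qed.

Lemma Cmod_tri3 p q r s :
  fst p = fst q - fst r + fst s -> snd p = snd q - snd r + snd s ->
  Cmod p <= Cmod q + Cmod r + Cmod s.
Proof.
  destruct p as [p1 p2], q as [q1 q2], r as [r1 r2], s as [s1 s2]; simpl; intros -> ->.
  eapply Rle_trans. apply (Cmod_tri (q1 - r1) (q2 - r2) s1 s2).
  apply Rplus_le_compat_r. unfold Rminus.
  eapply Rle_trans. apply Cmod_tri. rewrite Cmod_opp. lra.
Qed.


Definition lsum (g : Z -> R) (K : list Z) : R := fold_right (fun k acc => g k + acc) 0 K.

Lemma NoDup_remove_Z x K : NoDup K -> NoDup (remove Z.eq_dec x K).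
Proof.
  induction K as [|y K IH]; simpl; intros H; auto.
  apply NoDup_cons_iff in H as [Hy HK].
  destruct (Z.eq_dec x y); auto. constructor; auto.
  intros Hin. apply in_remove in Hin as [? ?]. contradiction.
Qed.

Lemma lsum_remove g x K : NoDup K -> In x K -> lsum g K = g x + lsum g (remove Z.eq_dec x K).
Proof.
  induction K as [|y K IH]; simpl; intros H Hin; [contradiction|].
  apply NoDup_cons_iff in H as [Hy HK].
  destruct (Z.eq_dec x y) as [<-|Hne].
  - rewrite notin_remove by auto. reflexivity.
  - destruct Hin as [->|Hin]; [congruence|]. simpl. rewrite IH by auto. ring.
Qed.

Fixpoint ends (L U : Z -> Z) (n : nat) (m k : Z) : Prop :=
  match n with
  | O => False
  | S n' =>
    if Z.eq_dec k (L m) then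
      if Z.eq_dec (L (m + 1)%Z) (L m + 1)%Z then
        if Z.eq_dec (U (m + 1)%Z) (U m + 1)%Z then ends L U n' (m + 1)%Z (U m) else True
      else ends L U n' (m + 1)%Z k
    else ends L U n' (m + 1)%Z k
  end.

Lemma lemmaA (L U : Z -> Z) (z V : Z -> R * R)
  (HL : forall m, (L m <= L (m + 1) <= L m + 1)%Z)
  (HU : forall m, (U m <= U (m + 1) <= U m + 1)%Z)
  (HLU : forall m, (L m < U m)%Z)
  (HD1 : forall m, fst (V m) - fst (V (m + 1)%Z) =
     (if Z.eq_dec (L (m + 1)%Z) (L m + 1)%Z then fst (z (L m)) else 0) -
     (if Z.eq_dec (U (m + 1)%Z) (U m + 1)%Z then fst (z (U m)) else 0))
  (HD2 : forall m, snd (V m) - snd (V (m + 1)%Z) =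
     (if Z.eq_dec (L (m + 1)%Z) (L m + 1)%Z then snd (z (L m)) else 0) -
     (if Z.eq_dec (U (m + 1)%Z) (U m + 1)%Z then snd (z (U m)) else 0)) :
  forall n m K, NoDup K ->
    (forall k, In k K -> (L m <= k < U m)%Z /\ ends L U n m k) ->
    lsum (fun k => Cmod (z k)) K <= Cmod (V m) + 2 * zsum (m + 1) n (fun j => Cmod (V j)).
Proof.
  induction n as [|n IH]; intros m K HK HIn.
  - destruct K as [|k K]; simpl.
    + pose proof (Cmod_nonneg (V m)); lra.
    + destruct (HIn k (or_introl eq_refl)) as [_ []].
  - rewrite zsum_S_lo.
    pose proof (Cmod_nonneg (V m)) as HVm. pose proof (Cmod_nonneg (V (m+1)%Z)) as HVm1.
    specialize (HD1 m). specialize (HD2 m).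
    destruct (Z.eq_dec (L (m + 1)%Z) (L m + 1)%Z) as [Hlinc|Hlinc];
    [destruct (in_dec Z.eq_dec (L m) K) as [Hin|Hnin]|].
    +
      rewrite (lsum_remove _ (L m) K HK Hin).
      set (K0 := remove Z.eq_dec (L m) K).
      assert (HK0 : forall k, In k K0 -> k <> L m /\ (L m <= k < U m)%Z /\ ends L U (S n) m k).
      { intros k Hk. apply in_remove in Hk as [Hk Hne]. split; auto. }
      destruct (HIn (L m) Hin) as [_ Hends]. simpl in Hends.
      destruct (Z.eq_dec (L m) (L m)) as [_|]; [|congruence].
      destruct (Z.eq_dec (L (m + 1)%Z) (L m + 1)%Z) as [_|]; [|congruence].
      destruct (Z.eq_dec (U (m + 1)%Z) (U m + 1)%Z) as [Huinc|Huinc].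
      * assert (IHK : lsum (fun k => Cmod (z k)) (U m :: K0) <=
                 Cmod (V (m + 1)%Z) + 2 * zsum (m + 1 + 1) n (fun j => Cmod (V j))).
        { apply IH.
          - constructor. intros Hin'. apply HK0 in Hin'. lia. apply NoDup_remove_Z; auto.
          - intros k [<-|Hk].
            + split; auto. specialize (HLU m). lia.
            + destruct (HK0 k Hk) as [Hne [Hw He]]. split. lia.
              simpl in He. destruct (Z.eq_dec k (L m)); [congruence|]. auto. }
        simpl in IHK.
        assert (Cmod (z (L m)) <= Cmod (V m) + Cmod (V (m+1)%Z) + Cmod (z (U m))).
        { apply Cmod_tri3; lra. }
        lra.
      * assert (IHK : lsum (fun k => Cmod (z k)) K0 <=
                 Cmod (V (m + 1)%Z) + 2 * zsum (m + 1 + 1) n (fun j => Cmod (V j))).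
        { apply IH.
          - apply NoDup_remove_Z; auto.
          - intros k Hk.
            destruct (HK0 k Hk) as [Hne [Hw He]]. split. specialize (HU m). lia.
            simpl in He. destruct (Z.eq_dec k (L m)); [congruence|]. auto. }
        assert (Cmod (z (L m)) <= Cmod (V m) + Cmod (V (m+1)%Z) + Cmod (0, 0)).
        { apply Cmod_tri3; simpl; lra. }
        assert (Cmod (0,0) = 0) by (unfold Cmod; simpl; replace (0*0+0*0) with 0 by ring; apply sqrt_0).
        lra.
    + assert (IHK : lsum (fun k => Cmod (z k)) K <=
                 Cmod (V (m + 1)%Z) + 2 * zsum (m + 1 + 1) n (fun j => Cmod (V j))).
      { apply IH; auto. intros k Hk. destruct (HIn k Hk) as [Hw He].
        assert (k <> L m) by (intros ->; contradiction).
        split. specialize (HU m). lia.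
        simpl in He. destruct (Z.eq_dec k (L m)); [congruence|]. auto. }
      lra.
    + assert (IHK : lsum (fun k => Cmod (z k)) K <=
                 Cmod (V (m + 1)%Z) + 2 * zsum (m + 1 + 1) n (fun j => Cmod (V j))).
      { apply IH; auto. intros k Hk. destruct (HIn k Hk) as [Hw He].
        split. specialize (HU m). specialize (HL m). lia.
        simpl in He. destruct (Z.eq_dec k (L m)); auto.
        destruct (Z.eq_dec (L (m + 1)%Z) (L m + 1)%Z); [congruence|]. auto. }
      lra.
Qed.


Fixpoint trk (L U : Z -> Z) (k : Z) (j : nat) : Z :=
  match j with
  | O => k
  | S j' => let e := trk L U k j' in
    if Z.eq_dec e (L (Z.of_nat j')) then
      if Z.eq_dec (L (Z.of_nat j' + 1)%Z) (L (Z.of_nat j') + 1)%Z then U (Z.of_nat j') else e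
    else e
  end.

Lemma ofS j : Z.of_nat (S j) = (Z.of_nat j + 1)%Z.
Proof. lia. Qed.

Lemma mono_nat (F : Z -> Z) (HF : forall m, (F m <= F (m + 1))%Z) :
  forall j d, (F (Z.of_nat j) <= F (Z.of_nat (j + d)))%Z.
Proof.
  intros j d; induction d.
  - rewrite Nat.add_0_r; lia.
  - rewrite Nat.add_succ_r, ofS. specialize (HF (Z.of_nat (j + d))). lia.
Qed.


Lemma trk_ok (L U : Z -> Z)
  (HL : forall m, (L m <= L (m + 1) <= L m + 1)%Z)
  (HU : forall m, (U m <= U (m + 1) <= U m + 1)%Z)
  (HLU : forall m, (L m < U m)%Z) (M : nat) (k : Z) :
  ~ ends L U M 0 k -> (L 0 <= k < U 0)%Z ->
  forall j, (j <= M)%nat -> (L (Z.of_nat j) <= trk L U k j < U (Z.of_nat j))%Z /\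
     ~ ends L U (M - j) (Z.of_nat j) (trk L U k j).
Proof.
  intros Hn Hw. induction j as [|j IH]; intros Hj.
  - simpl. rewrite Nat.sub_0_r. auto.
  - destruct IH as [Hw' Hn']; [lia|].
    replace (M - j)%nat with (S (M - S j)) in Hn' by lia.
    simpl in Hn'. simpl trk. rewrite ofS.
    set (e := trk L U k j) in *.
    specialize (HL (Z.of_nat j)). specialize (HU (Z.of_nat j)).
    destruct (Z.eq_dec e (L (Z.of_nat j))) as [He|He].
    + destruct (Z.eq_dec (L (Z.of_nat j + 1)%Z) (L (Z.of_nat j) + 1)%Z) as [Hi|Hi].
      * destruct (Z.eq_dec (U (Z.of_nat j + 1)%Z) (U (Z.of_nat j) + 1)%Z) as [Hu|Hu].
        -- split; auto. specialize (HLU (Z.of_nat j)). lia.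
        -- exfalso; auto.
      * split; auto. lia.
    + split; auto. lia.
Qed.

Lemma trk_fwd (L U : Z -> Z)
  (HU : forall m, (U m <= U (m + 1) <= U m + 1)%Z) k :
  forall j d, trk L U k (j + d) = trk L U k j \/ (U (Z.of_nat j) <= trk L U k (j + d))%Z.
Proof.
  intros j d; induction d.
  - rewrite Nat.add_0_r; auto.
  - rewrite Nat.add_succ_r. simpl trk.
    destruct (Z.eq_dec _ _); [destruct (Z.eq_dec _ _)|]; auto.
    right. pose proof (mono_nat U (fun m => proj1 (HU m)) j d). auto.
Qed.

Lemma trk_bwd (L U : Z -> Z)
  (HL : forall m, (L m <= L (m + 1) <= L m + 1)%Z) k :
  forall j d, trk L U k (j + d) = trk L U k j \/ (trk L U k j < L (Z.of_nat (j + d)))%Z.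
Proof.
  intros j d; induction d.
  - rewrite Nat.add_0_r; auto.
  - rewrite Nat.add_succ_r. simpl trk. rewrite ofS.
    specialize (HL (Z.of_nat (j + d))).
    destruct (Z.eq_dec _ _) as [He|He]; [destruct (Z.eq_dec _ _) as [Hi|Hi]|].
    + right. destruct IHd as [IH|IH]; lia.
    + destruct IHd as [IH|IH]; auto. right; lia.
    + destruct IHd as [IH|IH]; auto. right; lia.
Qed.

Lemma trk_same (L U : Z -> Z)
  (HL : forall m, (L m <= L (m + 1) <= L m + 1)%Z)
  (HU : forall m, (U m <= U (m + 1) <= U m + 1)%Z) k j m :
  (L (Z.of_nat m) <= trk L U k j < U (Z.of_nat m))%Z -> trk L U k j = trk L U k m.
Proof.
  intros Hw. destruct (Nat.le_ge_cases m j) as [Hmj|Hmj].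
  - replace j with (m + (j - m))%nat in * by lia.
    destruct (trk_fwd L U HU k m (j - m)); auto. lia.
  - replace m with (j + (m - j))%nat in * by lia.
    destruct (trk_bwd L U HL k j (m - j)); auto. lia.
Qed.

Lemma trk_distinct (L U : Z -> Z)
  (HL : forall m, (L m <= L (m + 1) <= L m + 1)%Z)
  (HU : forall m, (U m <= U (m + 1) <= U m + 1)%Z)
  (HLU : forall m, (L m < U m)%Z) (M : nat) k1 k2 :
  k1 <> k2 ->
  ~ ends L U M 0 k1 -> (L 0 <= k1 < U 0)%Z ->
  ~ ends L U M 0 k2 -> (L 0 <= k2 < U 0)%Z ->
  forall j, (j <= M)%nat -> trk L U k1 j <> trk L U k2 j.
Proof.
  intros Hne Hn1 Hw1 Hn2 Hw2. induction j as [|j IH]; intros Hj; simpl; auto.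
  pose proof (trk_ok L U HL HU HLU M k1 Hn1 Hw1 j ltac:(lia)) as [A1 _].
  pose proof (trk_ok L U HL HU HLU M k2 Hn2 Hw2 j ltac:(lia)) as [A2 _].
  specialize (IH ltac:(lia)).
  destruct (Z.eq_dec (trk L U k1 j) (L (Z.of_nat j))) as [E1|E1];
  destruct (Z.eq_dec (trk L U k2 j) (L (Z.of_nat j))) as [E2|E2];
  try (exfalso; apply IH; congruence);
  destruct (Z.eq_dec (L (Z.of_nat j + 1)%Z) (L (Z.of_nat j) + 1)%Z); lia.
Qed.

Definition xb (L U : Z -> Z) (M : nat) (k1 k2 : Z) (k : Z) : bool :=
  existsb (fun j => Z.eqb k (trk L U k1 j) || Z.eqb k (trk L U k2 j)) (seq 0 (S M)).

Lemma count2 (L U : Z -> Z)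
  (HL : forall m, (L m <= L (m + 1) <= L m + 1)%Z)
  (HU : forall m, (U m <= U (m + 1) <= U m + 1)%Z)
  (HLU : forall m, (L m < U m)%Z) (M : nat) k1 k2 :
  k1 <> k2 ->
  ~ ends L U M 0 k1 -> (L 0 <= k1 < U 0)%Z ->
  ~ ends L U M 0 k2 -> (L 0 <= k2 < U 0)%Z ->
  forall m, (m <= M)%nat ->
    zsum (L (Z.of_nat m)) (Z.to_nat (U (Z.of_nat m) - L (Z.of_nat m)))
      (fun k => b2R (xb L U M k1 k2 k)) = 2.
Proof.
  intros Hne Hn1 Hw1 Hn2 Hw2 m Hm.
  pose proof (trk_ok L U HL HU HLU M k1 Hn1 Hw1 m Hm) as [A1 _].
  pose proof (trk_ok L U HL HU HLU M k2 Hn2 Hw2 m Hm) as [A2 _].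
  pose proof (trk_distinct L U HL HU HLU M k1 k2 Hne Hn1 Hw1 Hn2 Hw2 m Hm) as D.
  set (p := trk L U k1 m) in *. set (q := trk L U k2 m) in *.
  rewrite (zsum_ext _ _ _ (fun k => (if Z.eq_dec k p then 1 else 0) + (if Z.eq_dec k q then 1 else 0))).
  - rewrite zsum_plus, !zsum_ind by lia. ring.
  - intros k Hk. unfold b2R, xb.
    destruct (existsb _ _) eqn:Ex.
    + apply existsb_exists in Ex as [j [Hj Hb]].
      apply in_seq in Hj.
      apply orb_true_iff in Hb as [Hb|Hb]; apply Z.eqb_eq in Hb; subst k.
      * assert (Hk1 : trk L U k1 j = p) by (apply trk_same; auto; rewrite <- Hk1 || idtac; lia). rewrite Hk1 in *.
        destruct (Z.eq_dec p p); [|congruence]. destruct (Z.eq_dec p q); [congruence|]. ring.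
      * assert (Hk1 : trk L U k2 j = q) by (apply trk_same; auto; lia). rewrite Hk1 in *.
        destruct (Z.eq_dec q p); [congruence|]. destruct (Z.eq_dec q q); [|congruence]. ring.
    + assert (Hp : forall j, In j (seq 0 (S M)) -> (Z.eqb k (trk L U k1 j) || Z.eqb k (trk L U k2 j))%bool = false).
      { intros j Hj. destruct (_ || _) eqn:E; auto.
        assert (existsb (fun j => Z.eqb k (trk L U k1 j) || Z.eqb k (trk L U k2 j)) (seq 0 (S M)) = true)
          by (apply existsb_exists; exists j; auto). congruence. }
      specialize (Hp m ltac:(apply in_seq; lia)).
      apply orb_false_iff in Hp as [N1 N2]. apply Z.eqb_neq in N1, N2. fold p in N1. fold q in N2.
      destruct (Z.eq_dec k p); [congruence|]. destruct (Z.eq_dec k q); [congruence|]. ring.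
Qed.


Definition Sm (x : Z -> R) (l u : Z) : R := zsum l (Z.to_nat (u - l)) x.

Lemma Sm_lo x l u : (l < u)%Z -> Sm x l u = x l + Sm x (l + 1) u.
Proof.
  intros H. unfold Sm. replace (Z.to_nat (u - l)) with (S (Z.to_nat (u - (l + 1)))) by lia.
  apply zsum_S_lo.
Qed.

Lemma Sm_hi x l u : (l <= u)%Z -> Sm x l (u + 1) = Sm x l u + x u.
Proof.
  intros H. unfold Sm. replace (Z.to_nat (u + 1 - l)) with (S (Z.to_nat (u - l))) by lia.
  simpl. replace (l + Z.of_nat (Z.to_nat (u - l)))%Z with u by lia. ring.
Qed.

Lemma Sm_step x l u l' u' : (l < u)%Z -> (l' = l \/ l' = l + 1)%Z -> (u' = u \/ u' = u + 1)%Z ->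
  Sm x l u - Sm x l' u' =
  (if Z.eq_dec l' (l + 1) then x l else 0) - (if Z.eq_dec u' (u + 1) then x u else 0).
Proof.
  intros H [->| ->] [->| ->];
  repeat (destruct (Z.eq_dec _ _); try lia).
  - ring.
  - rewrite Sm_hi by lia. ring.
  - rewrite Sm_lo by lia. ring.
  - rewrite Sm_hi by lia. rewrite (Sm_lo x l u) by lia. ring.
Qed.

Lemma zsum_zero lo n f : (forall k, (lo <= k < lo + Z.of_nat n)%Z -> f k = 0) -> zsum lo n f = 0.
Proof.
  induction n; intros H; simpl; auto. rewrite H by lia. rewrite IHn; [ring|]. intros; apply H; lia.
Qed.

Lemma zsum_window lo n L U (g x : Z -> R) :
  (lo <= L)%Z -> (L <= U)%Z -> (U <= lo + Z.of_nat n)%Z ->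
  (forall k, g k = if ((L <=? k) && (k <? U))%Z then x k else 0) ->
  zsum lo n g = Sm x L U.
Proof.
  intros H1 H2 H3 Hg.
  replace n with (Z.to_nat (L - lo) + (Z.to_nat (U - L) + (n - Z.to_nat (L - lo) - Z.to_nat (U - L))))%nat by lia.
  rewrite !zsum_split.
  rewrite (zsum_zero lo (Z.to_nat (L - lo))).
  2:{ intros k Hk. rewrite Hg. destruct (L <=? k)%Z eqn:E; [lia|]. reflexivity. }
  replace (lo + Z.of_nat (Z.to_nat (L - lo)))%Z with L by lia.
  rewrite (zsum_zero (L + _)).
  2:{ intros k Hk. rewrite Hg. destruct (k <? U)%Z eqn:E; [lia|]. rewrite andb_false_r. reflexivity. }
  unfold Sm. rewrite Rplus_0_l, Rplus_0_r. apply zsum_ext. intros k Hk. rewrite Hg.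
  destruct (L <=? k)%Z eqn:E1; [|lia]. destruct (k <? U)%Z eqn:E2; [|lia]. reflexivity.
Qed.

Fixpoint rl (lo : Z) (n : nat) : list Z :=
  match n with O => nil | S n' => (lo + Z.of_nat n')%Z :: rl lo n' end.

Lemma rl_in lo n k : In k (rl lo n) <-> (lo <= k < lo + Z.of_nat n)%Z.
Proof.
  induction n; simpl; [lia|]. rewrite IHn. lia.
Qed.

Lemma rl_nodup lo n : NoDup (rl lo n).
Proof.
  induction n; simpl; constructor; auto. rewrite rl_in. lia.
Qed.

Lemma rl_lsum g lo n : lsum g (rl lo n) = zsum lo n g.
Proof. induction n; simpl; auto. rewrite IHn. reflexivity. Qed.

Lemma Cmod_zsum (z : Z -> R * R) lo n :
  Cmod (zsum lo n (fun k => fst (z k)), zsum lo n (fun k => snd (z k))) <= zsum lo n (fun k => Cmod (z k)).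
Proof.
  induction n; simpl.
  - unfold Cmod; simpl. replace (0*0+0*0) with 0 by ring. rewrite sqrt_0. lra.
  - eapply Rle_trans. apply Cmod_tri. destruct (z (lo + Z.of_nat n)%Z); simpl in *. lra.
Qed.

Lemma div_ge b K A : 0 < b -> (K >= A / b <-> b * K >= A).
Proof.
  intros Hb. assert (E : b * (A / b) = A) by (field; lra). split; intros H.
  - rewrite <- E. apply Rle_ge. apply Rmult_le_compat_l; lra.
  - assert (A / b <= K); [|lra]. apply (Rmult_le_reg_l b); lra.
Qed.

Lemma div_lt b K A : 0 < b -> (K < A / b <-> b * K < A).
Proof.
  intros Hb. assert (E : b * (A / b) = A) by (field; lra). split; intros H.
  - rewrite <- E. apply Rmult_lt_compat_l; lra.
  - apply (Rmult_lt_reg_l b); lra.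
Qed.


Definition Lr (a b t : R) (m : Z) : Z := ceil ((a * IZR m - t) / b).
Definition Ur (a b c t : R) (m : Z) : Z := ceil ((a * IZR m - t + c) / b).

Lemma Mentry_eq a b c t m k : 0 < b ->
  Mentry a b c t m k = if ((Lr a b t m <=? k) && (k <? Ur a b c t m))%Z then 1 else 0.
Proof.
  intros Hb. unfold Mentry, Lr, Ur.
  pose proof (ceil_ge k ((a * IZR m - t) / b)) as G.
  pose proof (ceil_lt k ((a * IZR m - t + c) / b)) as T.
  rewrite div_ge in G by lra. rewrite div_lt in T by lra.
  destruct (Rle_dec 0 (t - a * IZR m + b * IZR k)) as [H1|H1];
  [destruct (Rlt_dec (t - a * IZR m + b * IZR k) c) as [H2|H2]|].
  - assert (A1 : (k >= ceil ((a * IZR m - t) / b))%Z) by (apply G; lra).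
    assert (A2 : (k < ceil ((a * IZR m - t + c) / b))%Z) by (apply T; lra).
    destruct (_ <=? _)%Z eqn:E1; [|lia]. destruct (_ <? _)%Z eqn:E2; [|lia]. reflexivity.
  - destruct (_ <? _)%Z eqn:E2; [|rewrite andb_false_r; reflexivity].
    exfalso. assert (b * IZR k < a * IZR m - t + c) by (apply T; lia). lra.
  - destruct (_ <=? _)%Z eqn:E1; [|reflexivity].
    exfalso. assert (b * IZR k >= a * IZR m - t) by (apply G; lia). lra.
Qed.

Lemma window_ok a b c t m (x : Z -> R) : 0 < b -> b < c ->
  Mapply a b c t x m = Sm x (Lr a b t m) (Ur a b c t m).
Proof.
  intros Hb Hbc. unfold Mapply, Mwin_lo, Mwin_len.
  set (y := (a * IZR m - t) / b).
  assert (Ey : (a * IZR m - t + c) / b = y + c / b) by (unfold y; field; lra).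
  assert (Hcb : c / b > 1). { apply Rlt_gt. apply (Rmult_lt_reg_l b); [lra|]. field_simplify; lra. }
  destruct (archimed y) as [Y1 Y2]. destruct (archimed (c / b)) as [C1 C2].
  pose proof (ceil_spec y) as [L1 L2]. pose proof (ceil_spec (y + c / b)) as [U1 U2].
  assert (P : (0 <= up (c / b))%Z) by (apply le_IZR; lra).
  apply zsum_window.
  - unfold Lr. fold y. apply le_IZR. rewrite minus_IZR. simpl. lra.
  - unfold Lr, Ur. fold y. rewrite Ey. apply le_IZR. lra.
  - unfold Ur. rewrite Ey. rewrite Z2Nat.id by lia. apply le_IZR.
    rewrite !plus_IZR, minus_IZR. simpl. lra.
  - intros k. rewrite Mentry_eq by lra. destruct (_ && _); ring.
Qed.

Lemma LU_props a b c t : 0 < a -> a < b -> b < c ->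
  (forall m, (Lr a b t m <= Lr a b t (m + 1) <= Lr a b t m + 1)%Z) /\
  (forall m, (Ur a b c t m <= Ur a b c t (m + 1) <= Ur a b c t m + 1)%Z) /\
  (forall m, (Lr a b t m < Ur a b c t m)%Z).
Proof.
  intros Ha Hab Hbc.
  assert (Hab' : 0 < a / b < 1).
  { split. apply Rdiv_lt_0_compat; lra. apply (Rmult_lt_reg_l b); [lra|]. field_simplify; lra. }
  assert (Hcb : c / b > 1). { apply Rlt_gt. apply (Rmult_lt_reg_l b); [lra|]. field_simplify; lra. }
  split; [|split]; intros m; unfold Lr, Ur; rewrite ?plus_IZR.
  - apply ceil_mono. replace ((a * (IZR m + 1) - t) / b) with ((a * IZR m - t) / b + a / b) by (field; lra). lra.
  - apply ceil_mono. replace ((a * (IZR m + 1) - t + c) / b) with ((a * IZR m - t + c) / b + a / b) by (field; lra). lra.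
  - apply ceil_lt. replace ((a * IZR m - t + c) / b) with ((a * IZR m - t) / b + c / b) by (field; lra).
    pose proof (ceil_spec ((a * IZR m - t) / b)). lra.
Qed.

Lemma L0 a b t : 0 < b -> 0 <= t < b -> Lr a b t 0 = 0%Z.
Proof.
  intros Hb Ht. unfold Lr. simpl.
  assert (E : (a * 0 - t) / b = - (t / b)) by (field; lra).
  assert (0 <= t / b < 1).
  { split. unfold Rdiv; apply Rmult_le_pos; [lra | left; apply Rinv_0_lt_compat; lra]. apply (Rmult_lt_reg_l b); [lra|]. field_simplify; lra. }
  rewrite E.
  assert (A1 : (0 >= ceil (- (t / b)))%Z) by (apply ceil_ge; simpl; lra).
  assert (A2 : (-1 < ceil (- (t / b)))%Z) by (apply ceil_lt; simpl; lra).
  lia.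
Qed.

Theorem lemma3p5 (a b c : R) (Q : nat) :
  0 < a -> a < b -> b < c -> IsQ a b c Q ->
  forall (t : R) (z : Z -> R * R), 0 <= t < b ->
    sum_mu a (a * INR Q + 2 * a + b + c)
      (fun m => Cmod (Mapply_C a b c t z m))
    >= b / (2 * c) * Cmod (z 0%Z).
Proof.
  intros Ha Hab Hbc [HQ _] t z Ht.
  assert (Hb : 0 < b) by lra.
  set (L := Lr a b t). set (U := Ur a b c t).
  destruct (LU_props a b c t Ha Hab Hbc) as [HL [HU HLU]]. fold L U in HL, HU, HLU.
  assert (HL0 : L 0%Z = 0%Z) by (apply L0; auto).
  set (V := fun m => Mapply_C a b c t z m).
  assert (HV : forall m, V m = (Sm (fun k => fst (z k)) (L m) (U m), Sm (fun k => snd (z k)) (L m) (U m))).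
  { intros m. unfold V, Mapply_C. rewrite !window_ok by lra. reflexivity. }
  assert (HD1 : forall m, fst (V m) - fst (V (m + 1)%Z) =
     (if Z.eq_dec (L (m + 1)%Z) (L m + 1)%Z then fst (z (L m)) else 0) -
     (if Z.eq_dec (U (m + 1)%Z) (U m + 1)%Z then fst (z (U m)) else 0)).
  { intros m. rewrite !HV. simpl. apply Sm_step. apply HLU.
    specialize (HL m); lia. specialize (HU m); lia. }
  assert (HD2 : forall m, snd (V m) - snd (V (m + 1)%Z) =
     (if Z.eq_dec (L (m + 1)%Z) (L m + 1)%Z then snd (z (L m)) else 0) -
     (if Z.eq_dec (U (m + 1)%Z) (U m + 1)%Z then snd (z (U m)) else 0)).
  { intros m. rewrite !HV. simpl. apply Sm_step. apply HLU.
    specialize (HL m); lia. specialize (HU m); lia. }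
  pose proof (lemmaA L U z V HL HU HLU HD1 HD2) as LA.
  assert (Hfull : forall k1 k2, k1 <> k2 -> (L 0 <= k1 < U 0)%Z -> (L 0 <= k2 < U 0)%Z ->
            ~ ends L U Q 0 k1 -> ~ ends L U Q 0 k2 -> False).
  { intros k1 k2 Hne W1 W2 N1 N2.
    assert (Hrun : run_len a b c (S Q)).
    { exists t, (xb L U Q k1 k2), 0%Z. intros j Hj. unfold inK.
      rewrite window_ok by lra. simpl.
      pose proof (count2 L U HL HU HLU Q k1 k2 Hne N1 W1 N2 W2 j ltac:(lia)) as C.
      exact C. }
    apply HQ in Hrun. lia. }
  assert (Main : Cmod (z 0%Z) <= 2 * zsum 0 (S Q) (fun j => Cmod (V j))).
  { rewrite zsum_S_lo. simpl (0 + 1)%Z.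
    destruct (classic (ends L U Q 0 0)) as [E0|E0].
    - specialize (LA Q 0%Z (0%Z :: nil)). simpl in LA.
      assert (H0 : Cmod (z 0%Z) + 0 <= Cmod (V 0%Z) + 2 * zsum 1 Q (fun j => Cmod (V j))).
      { apply LA. constructor; [simpl; tauto| constructor].
        intros k [<-|[]]. split; auto. rewrite HL0. specialize (HLU 0%Z). lia. }
      pose proof (Cmod_nonneg (V 0%Z)). lra.
    - assert (HU0 : (1 <= U 0)%Z) by (specialize (HLU 0%Z); lia).
      set (n' := Z.to_nat (U 0%Z - 1)).
      specialize (LA Q 0%Z (rl 1 n') (rl_nodup 1 n')).
      rewrite rl_lsum in LA.
      assert (H1 : zsum 1 n' (fun k => Cmod (z k)) <= Cmod (V 0%Z) + 2 * zsum 1 Q (fun j => Cmod (V j))).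
      { apply LA. intros k Hk. apply rl_in in Hk. unfold n' in Hk. rewrite Z2Nat.id in Hk by lia.
        split. rewrite HL0; lia.
        destruct (classic (ends L U Q 0 k)) as [|Nk]; auto. exfalso.
        apply (Hfull 0%Z k); try lia; auto. }
      assert (Hs : forall (g : Z -> R), Sm g (L 0%Z) (U 0%Z) = g 0%Z + zsum 1 n' g).
      { intros g. rewrite HL0. unfold Sm. replace (Z.to_nat (U 0%Z - 0)) with (S n') by (unfold n'; lia).
        rewrite zsum_S_lo. reflexivity. }
      assert (H2 : Cmod (z 0%Z) <= Cmod (V 0%Z) +
         Cmod (zsum 1 n' (fun k => fst (z k)), zsum 1 n' (fun k => snd (z k))) + Cmod (0, 0)).
      { apply Cmod_tri3; rewrite HV; simpl; rewrite Hs; ring. }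
      pose proof (Cmod_zsum z 1 n').
      assert (Cmod (0,0) = 0) by (unfold Cmod; simpl; replace (0*0+0*0) with 0 by ring; apply sqrt_0).
      lra. }
  set (B := a * INR Q + 2 * a + b + c).
  assert (HS : zsum 0 (S Q) (fun j => Cmod (V j)) <= sum_mu a B (fun m => Cmod (Mapply_C a b c t z m))).
  { unfold sum_mu.
    assert (HB : B / a > INR Q).
    { apply Rlt_gt. apply (Rmult_lt_reg_l a); [lra|]. unfold B. field_simplify; lra. }
    destruct (archimed (B / a)) as [A1 _].
    rewrite INR_IZR_INZ in HB.
    assert (Hup : (Z.of_nat Q < up (B / a))%Z) by (apply lt_IZR; lra).
    replace (S (Z.to_nat (up (B / a)))) with (S Q + (Z.to_nat (up (B / a)) - Q))%nat by lia.
    rewrite zsum_split.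
    match goal with |- _ <= ?X + ?Y => assert (0 <= Y) end.
    { apply zsum_nonneg. intros k. destruct (Rle_dec _ _); [apply Cmod_nonneg| lra]. }
    assert (zsum 0 (S Q) (fun j => Cmod (V j)) = zsum 0 (S Q) (fun m => if Rle_dec (a * IZR m) B then Cmod (Mapply_C a b c t z m) else 0)); [|lra].
    apply zsum_ext. intros k Hk. destruct (Rle_dec _ _) as [|Hn]; [reflexivity|].
    exfalso. apply Hn. unfold B.
    assert (IZR k <= INR Q) by (rewrite INR_IZR_INZ; apply IZR_le; lia).
    assert (0 <= IZR k) by (apply IZR_le; lia). nra. }
  assert (Hfr : b / (2 * c) <= 1 / 2).
  { apply (Rmult_le_reg_l (2 * c)); [lra|]. field_simplify; lra. }
  pose proof (Cmod_nonneg (z 0%Z)).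
  apply Rle_ge. fold B.
  assert (b / (2 * c) * Cmod (z 0%Z) <= 1 / 2 * Cmod (z 0%Z)) by (apply Rmult_le_compat_r; lra).
  unfold V in *. lra.
Qed.
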